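(* $$\sum_{k=1}^\infty \frac{1}{2^{k+1}(2k-1)k(2k+1)}=\frac{3}{2\sqrt2}\ln(1+\sqrt2)-\frac12(\ln 2+1),$$ $$\sum_{k=1}^\infty \frac{1}{2^{k+2}(2k-1)k^2(2k+1)}=\frac12+\frac18\ln^2 2-\frac{\pi^2}{48}-\frac{1}{2\sqrt2}\ln(1+\sqrt2),$$ $$\sum_{k=1}^\infty \frac{1}{2^{k+3}(2k-1)k^3(2k+1)}=\frac{3}{2\sqrt2}\ln(1+\sqrt2)+\frac{\pi^2\ln 2}{96}-\frac12(\ln 2+1)-\frac{\ln^3 2}{48}-\frac{7}{64}\zeta(3).$$
   Context: $\zeta$ is the Riemann zeta function. *)

(* Defs.v *)
From Stdlib Require Import Reals.
From Coquelicot Require Import Coquelicot.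
Open Scope R_scope.

Definition zeta3 : R := Series (fun n : nat => 1 / (INR (n + 1)) ^ 3).

Definition term (m k : nat) : R :=
  1 / (2 ^ (k + m) * (2 * INR k - 1) * INR k ^ m * (2 * INR k + 1)).

(* Main.v *)
Require Import Defs.
From Stdlib Require Import Reals Lra Lia.
From Coquelicot Require Import Coquelicot.
Open Scope R_scope.

Fixpoint fs (g : nat -> R) (n : nat) : R :=
  match n with O => 0 | S m => fs g m + g m end.

Lemma fs_ext g h n : (forall k, (k < n)%nat -> g k = h k) -> fs g n = fs h n.
Proof.
  induction n as [|n IH]; intros H; simpl; auto.
  rewrite IH by (intros; apply H; lia). rewrite H by lia. reflexivity.
Qed.

Lemma fs_plus g h n : fs (fun k => g k + h k) n = fs g n + fs h n.
Proof. induction n; simpl; [lra|rewrite IHn; lra]. Qed.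

Lemma fs_scal c g n : fs (fun k => c * g k) n = c * fs g n.
Proof. induction n; simpl; [lra|rewrite IHn; lra]. Qed.

Lemma fs_const c n : fs (fun _ => c) n = INR n * c.
Proof. induction n; simpl fs; [simpl; lra|rewrite IHn, S_INR; lra]. Qed.

Lemma fs_split g a b : fs g (a + b) = fs g a + fs (fun k => g (a + k)%nat) b.
Proof.
  induction b; simpl.
  - rewrite Nat.add_0_r; lra.
  - rewrite Nat.add_succ_r; simpl; rewrite IHb; lra.
Qed.

Lemma fs_first h n : fs h (S n) = h 0%nat + fs (fun k => h (S k)) n.
Proof. induction n; simpl in *; [lra|rewrite IHn; lra]. Qed.

Lemma fs_rev g n : fs g n = fs (fun k => g (n - 1 - k)%nat) n.
Proof.
  induction n as [|n IH]; [reflexivity|].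
  rewrite (fs_first (fun k => g (S n - 1 - k)%nat)).
  change (fs g (S n)) with (fs g n + g n). rewrite IH.
  replace (S n - 1 - 0)%nat with n by lia.
  rewrite (fs_ext (fun k => g (n - 1 - k)%nat) (fun k => g (S n - 1 - S k)%nat)).
  - lra.
  - intros k Hk. f_equal. lia.
Qed.

Lemma fs_even_odd g n :
  fs g (2 * n) = fs (fun k => g (2 * k)%nat) n + fs (fun k => g (2 * k + 1)%nat) n.
Proof.
  induction n; [simpl; lra|].
  replace (2 * S n)%nat with (S (S (2 * n))) by lia.
  change (fs g (S (S (2 * n)))) with (fs g (2 * n) + g (2 * n)%nat + g (S (2 * n))).
  change (fs (fun k => g (2 * k)%nat) (S n)) with (fs (fun k => g (2 * k)%nat) n + g (2 * n)%nat).
  change (fs (fun k => g (2 * k + 1)%nat) (S n)) with (fs (fun k => g (2 * k + 1)%nat) n + g (2 * n + 1)%nat).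
  rewrite IHn. replace (2 * n + 1)%nat with (S (2*n))%nat by lia. lra.
Qed.

Lemma fs_le g h n : (forall k, (k < n)%nat -> g k <= h k) -> fs g n <= fs h n.
Proof.
  induction n; intros H; simpl; [lra|].
  assert (fs g n <= fs h n) by (apply IHn; intros; apply H; lia).
  assert (g n <= h n) by (apply H; lia). lra.
Qed.

Lemma fs_mono g a b : (forall k, 0 <= g k) -> (a <= b)%nat -> fs g a <= fs g b.
Proof.
  intros H Hab. replace b with (a + (b - a))%nat by lia.
  rewrite fs_split.
  assert (0 <= fs (fun k => g (a + k)%nat) (b - a)).
  { clear Hab. induction (b - a)%nat; simpl; [lra|]. specialize (H (a + n)%nat). lra. }
  lra.
Qed.

Lemma sum_n_fs (a : nat -> R) n : sum_n a n = fs a (S n).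
Proof.
  induction n.
  - rewrite sum_O. simpl. lra.
  - rewrite sum_Sn, IHn. simpl. unfold plus; simpl. lra.
Qed.

Lemma is_series_fs (a : nat -> R) (l : R) : is_series a l <-> is_lim_seq (fs a) l.
Proof.
  split; intros H.
  - apply is_lim_seq_incr_1.
    apply (is_lim_seq_ext (sum_n a)). { intros; apply sum_n_fs. } exact H.
  - apply is_lim_seq_incr_1 in H.
    apply (is_lim_seq_ext _ (sum_n a)) in H. { exact H. }
    intros; symmetry; apply sum_n_fs.
Qed.

Definition csc2 y := / (sin y) ^ 2.

Lemma dup y : 0 < y < PI -> csc2 (y / 2) + csc2 (y / 2 + PI / 2) = 4 * csc2 y.
Proof.
  intros Hy. unfold csc2.
  assert (Hs : 0 < sin (y/2)) by (apply sin_gt_0; lra).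
  assert (Hc : 0 < cos (y/2)) by (apply cos_gt_0; lra).
  rewrite sin_plus, sin_PI2, cos_PI2.
  assert (Hsy : sin y = 2 * sin (y/2) * cos (y/2)) by (rewrite <- sin_2a; f_equal; field).
  rewrite Hsy.
  assert (H1 : sin (y/2) ^ 2 + cos (y/2) ^ 2 = 1).
  { pose proof (sin2_cos2 (y/2)) as Hq. unfold Rsqr in Hq. lra. }
  field_simplify; [|lra|lra].
  rewrite H1. field; lra.
Qed.

Lemma S_dup n x : 0 < x < PI ->
  fs (fun k => csc2 ((x + INR k * PI) / 2 ^ n)) (2 ^ n) = 4 ^ n * csc2 x.
Proof.
  intros Hx. revert x Hx. induction n as [|n IH]; intros x Hx.
  - simpl. rewrite Rmult_0_l, Rplus_0_r, Rdiv_1_r. lra.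
  - assert (E : (2 ^ S n = 2 ^ n + 2 ^ n)%nat) by (simpl; lia).
    rewrite E, fs_split, <- fs_plus.
    rewrite (fs_ext _ (fun k => 4 * csc2 ((x + INR k * PI) / 2 ^ n))).
    + rewrite fs_scal, IH by exact Hx. simpl. ring.
    + intros k Hk.
      assert (Hk' : INR k + 1 <= 2 ^ n).
      { rewrite <- S_INR. replace 2 with (INR 2) by (simpl; lra). rewrite <- pow_INR.
        apply le_INR. lia. }
      assert (Hp : 0 < 2 ^ n) by (apply pow_lt; lra).
      rewrite <- dup.
      * f_equal.
        -- f_equal. simpl. field. lra.
        -- f_equal. rewrite plus_INR, pow_INR. replace (INR 2) with 2 by (simpl; lra).
           simpl. field. lra.
      * split.
        -- apply Rdiv_lt_0_compat; [|lra]. pose proof (pos_INR k). pose proof PI_RGT_0. nra.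
        -- apply Rmult_lt_reg_r with (2 ^ n); [lra|]. unfold Rdiv. rewrite Rmult_assoc, Rinv_l by lra.
           pose proof PI_RGT_0. nra.
Qed.

Lemma pow4 m : 4 ^ m = (2 ^ m) ^ 2.
Proof. induction m; simpl; [lra|]. rewrite IHm. ring. Qed.

Lemma half_sum m :
  fs (fun k => csc2 ((2 * INR k + 1) * PI / (4 * 2 ^ m))) (2 ^ m) = 2 * (2 ^ m) ^ 2.
Proof.
  pose proof PI_RGT_0 as Hpi.
  assert (Hp : 0 < 2 ^ m) by (apply pow_lt; lra).
  pose proof (S_dup (S m) (PI / 2) ltac:(lra)) as H.
  unfold csc2 at 2 in H. rewrite sin_PI2 in H.
  assert (E : (2 ^ S m = 2 ^ m + 2 ^ m)%nat) by (simpl; lia).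
  rewrite E, fs_split in H.
  set (g := fun k => csc2 ((PI / 2 + INR k * PI) / 2 ^ S m)) in H.
  rewrite (fs_ext (fun k => g (2 ^ m + k)%nat) (fun k => g (2 ^ m - 1 - k)%nat)) in H.
  - rewrite <- fs_rev in H.
    rewrite (fs_ext _ g).
    + rewrite pow4 in H. simpl in H. lra.
    + intros k Hk. unfold g. f_equal. simpl. field. lra.
  - intros k Hk. unfold g, csc2. f_equal. f_equal.
    rewrite <- sin_PI_x. f_equal.
    rewrite plus_INR, pow_INR.
    rewrite (minus_INR (2 ^ m - 1) k) by lia.
    rewrite (minus_INR (2 ^ m) 1).
    2:{ pose proof (Nat.pow_gt_lin_r 2 m). lia. }
    rewrite pow_INR. replace (INR 2) with 2 by (simpl; lra). simpl. field. lra.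
Qed.

Lemma sin_gt_xcos y : 0 < y -> y <= PI / 2 -> y * cos y < sin y.
Proof.
  intros H0 H1. pose proof PI2_1.
  pose (pr := derivable_minus _ _ derivable_sin (derivable_mult _ _ derivable_id derivable_cos)).
  assert (Hlt := MVT.derive_increasing_interv 0 (PI/2) (sin - id * cos)%F pr ltac:(lra)).
  assert (Hd : forall t, 0 < t < PI/2 -> 0 < derive_pt (sin - id * cos)%F t (pr t)).
  { intros t Ht.
    rewrite (derive_pt_eq_0 _ _ (t * sin t) (pr t)).
    - assert (0 < sin t) by (apply sin_gt_0; lra). nra.
    - apply is_derive_Reals. unfold minus_fct, mult_fct, id.
      auto_derive; [auto|ring]. }
  specialize (Hlt Hd 0 y ltac:(lra) ltac:(lra) H0).
  unfold minus_fct, mult_fct, id in Hlt. rewrite sin_0 in Hlt. lra.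
Qed.

Lemma tri_lo y : 0 < y -> y <= PI/2 -> / y ^ 2 < csc2 y.
Proof.
  intros H0 H1. unfold csc2.
  assert (0 < sin y) by (apply sin_gt_0; pose proof PI_RGT_0; lra).
  pose proof (sin_lt_x y H0).
  apply Rinv_lt_contravar; [apply Rmult_lt_0_compat; apply pow_lt; lra|].
  nra.
Qed.

Lemma tri_hi y : 0 < y -> y <= PI/2 -> csc2 y - 1 < / y ^ 2.
Proof.
  intros H0 H1. unfold csc2.
  assert (Hs : 0 < sin y) by (apply sin_gt_0; pose proof PI_RGT_0; lra).
  assert (Hc : 0 <= cos y) by (apply cos_ge_0; pose proof PI_RGT_0; lra).
  pose proof (sin_gt_xcos y H0 H1).
  assert (H1' : sin y ^ 2 + cos y ^ 2 = 1).
  { pose proof (sin2_cos2 y) as Hq. unfold Rsqr in Hq. lra. }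
  replace (/ sin y ^ 2 - 1) with (cos y ^ 2 / sin y ^ 2) by (replace (cos y ^ 2) with (1 - sin y ^ 2) by lra; field; lra).
  apply Rmult_lt_reg_r with (y ^ 2 * sin y ^ 2). { apply Rmult_lt_0_compat; apply pow_lt; lra. }
  field_simplify; try lra.
  assert (0 <= y * cos y) by (apply Rmult_le_pos; lra).
  assert (0 < (sin y - y * cos y) * (sin y + y * cos y)) by (apply Rmult_lt_0_compat; lra).
  nra.
Qed.

Definition oddt (k : nat) := / (2 * INR k + 1) ^ 2.

Lemma T_bounds m : PI ^ 2 / 8 - PI ^ 2 / (16 * 2 ^ m) <= fs oddt (2 ^ m) <= PI ^ 2 / 8.
Proof.
  pose proof PI_RGT_0 as Hpi.
  assert (Hp : 0 < 2 ^ m) by (apply pow_lt; lra).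
  set (Nr := 2 ^ m) in *.
  set (y := fun k : nat => (2 * INR k + 1) * PI / (4 * Nr)).
  assert (Hy : forall k, (k < 2 ^ m)%nat -> 0 < y k <= PI / 2).
  { intros k Hk. unfold y. assert (INR k + 1 <= Nr).
    { rewrite <- S_INR. unfold Nr. replace 2 with (INR 2) by (simpl; lra). rewrite <- pow_INR.
      apply le_INR. lia. }
    pose proof (pos_INR k). split.
    - apply Rdiv_lt_0_compat; nra.
    - apply Rmult_le_reg_r with (4 * Nr); [lra|]. unfold Rdiv.
      rewrite Rmult_assoc, Rinv_l by lra. nra. }
  set (c := 16 * Nr ^ 2 / PI ^ 2).
  assert (Hc : 0 < c) by (unfold c; apply Rdiv_lt_0_compat; [apply Rmult_lt_0_compat; [lra|apply pow_lt; lra]|apply pow_lt; lra]).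
  assert (Hinv : fs (fun k => / y k ^ 2) (2 ^ m) = c * fs oddt (2 ^ m)).
  { rewrite <- fs_scal. apply fs_ext. intros k _. unfold y, c, oddt.
    pose proof (pos_INR k). field. repeat split; lra. }
  assert (Hsum := half_sum m). fold Nr in Hsum.
  assert (Hsum' : fs (fun k => csc2 (y k)) (2 ^ m) = 2 * Nr ^ 2) by exact Hsum.
  assert (U : fs (fun k => / y k ^ 2) (2 ^ m) <= fs (fun k => csc2 (y k)) (2 ^ m)).
  { apply fs_le. intros k Hk. destruct (Hy k Hk). left. apply tri_lo; lra. }
  assert (L : fs (fun k => csc2 (y k) + (-1)) (2 ^ m) <= fs (fun k => / y k ^ 2) (2 ^ m)).
  { apply fs_le. intros k Hk. destruct (Hy k Hk). left. pose proof (tri_hi (y k)). lra. }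
  rewrite fs_plus, fs_const, Hsum' in L. rewrite Hsum', Hinv in U. rewrite Hinv in L.
  assert (HN : INR (2 ^ m) = Nr) by (unfold Nr; rewrite pow_INR; simpl; f_equal; lra).
  rewrite HN in L.
  set (T := fs oddt (2 ^ m)) in *.
  assert (E1 : PI ^ 2 / 8 = 2 * Nr ^ 2 / c) by (unfold c; field; lra).
  assert (E2 : PI ^ 2 / 8 - PI ^ 2 / (16 * Nr) = (2 * Nr ^ 2 - Nr) / c) by (unfold c; field; lra).
  rewrite E2, E1. split.
  - apply Rmult_le_reg_r with c; [lra|]. unfold Rdiv. rewrite Rmult_assoc, Rinv_l by lra. lra.
  - apply Rmult_le_reg_r with c; [lra|]. unfold Rdiv. rewrite Rmult_assoc, Rinv_l by lra. lra.
Qed.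

Lemma oddt_pos k : 0 <= oddt k.
Proof. unfold oddt. pose proof (pos_INR k). apply Rlt_le, Rinv_0_lt_compat, pow_lt. lra. Qed.

Lemma lim_inv_S : is_lim_seq (fun n => / INR (S n)) 0.
Proof.
  assert (H := is_lim_seq_inv _ _ is_lim_seq_INR).
  assert (H' : is_lim_seq (fun n => / INR n) 0).
  { apply H. discriminate. }
  apply is_lim_seq_incr_1 in H'. exact H'.
Qed.

Lemma basel_odd : is_series oddt (PI ^ 2 / 8).
Proof.
  apply is_series_fs. apply is_lim_seq_incr_1.
  pose proof PI_RGT_0 as Hpi.
  apply is_lim_seq_le_le with (u := fun n => PI ^ 2 / 8 - PI ^ 2 / 8 * / INR (S n))
                              (w := fun _ => PI ^ 2 / 8).
  - intros n. split.
    + pose proof (Nat.log2_spec (S n) ltac:(lia)) as [H1 H2].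
      set (m := Nat.log2 (S n)) in *.
      pose proof (T_bounds m) as [Tl _].
      pose proof (fs_mono oddt _ _ oddt_pos H1).
      assert (HN : INR (S n) <= 2 * 2 ^ m).
      { replace (2 * 2 ^ m) with (INR (2 ^ S m)).
        - apply le_INR. lia.
        - rewrite pow_INR. simpl. replace (1+1) with 2 by ring. reflexivity. }
      assert (Hp : 0 < 2 ^ m) by (apply pow_lt; lra).
      assert (0 < INR (S n)) by (apply lt_0_INR; lia).
      assert (PI ^ 2 / (16 * 2 ^ m) <= PI ^ 2 / 8 * / INR (S n)).
      { assert (0 < PI ^ 2) by (apply pow_lt; lra).
        unfold Rdiv. rewrite Rmult_assoc. apply Rmult_le_compat_l; [lra|].
        rewrite <- Rinv_mult. apply Rinv_le_contravar; [apply Rmult_lt_0_compat; lra| lra]. }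
      lra.
    + pose proof (T_bounds (S n)) as [_ Tu].
      pose proof (Nat.pow_gt_lin_r 2 (S n) ltac:(lia)).
      pose proof (fs_mono oddt (S n) (2 ^ S n) oddt_pos ltac:(lia)). lra.
  - replace (Finite (PI ^ 2 / 8)) with (Finite (PI ^ 2 / 8 - PI ^ 2 / 8 * 0)) by (f_equal; ring).
    apply is_lim_seq_minus'. apply is_lim_seq_const.
    apply (is_lim_seq_scal_l _ (PI ^ 2 / 8) 0). apply lim_inv_S.
  - apply is_lim_seq_const.
Qed.

Definition zt (s : nat) (n : nat) : R := / (INR (S n)) ^ s.

Lemma zt_pos s n : 0 < zt s n.
Proof. unfold zt. apply Rinv_0_lt_compat, pow_lt, lt_0_INR. lia. Qed.

Lemma zt_even k : zt 2 (2 * k) = oddt k.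
Proof. unfold zt, oddt. f_equal. f_equal. rewrite S_INR, mult_INR. simpl. ring. Qed.

Lemma zt_odd s k : zt s (2 * k + 1) = / 2 ^ s * zt s k.
Proof.
  unfold zt. replace (INR (S (2 * k + 1))) with (2 * INR (S k))
    by (rewrite !S_INR, plus_INR, mult_INR; simpl; ring).
  rewrite Rpow_mult_distr, Rinv_mult. reflexivity.
Qed.

Lemma sub2 : filterlim (fun n => (2 * n)%nat) eventually eventually.
Proof.
  intros P [N HN]. exists N. intros n Hn. apply HN. lia.
Qed.

Lemma ex_series_pos_le (a b : nat -> R) : (forall n, 0 <= a n <= b n) -> ex_series b -> ex_series a.
Proof.
  intros H Hb. apply (ex_series_le a b); [|exact Hb].
  intros n. change (norm (a n)) with (Rabs (a n)). rewrite Rabs_pos_eq; apply H.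
Qed.

Lemma ex_zt2 : ex_series (zt 2).
Proof.
  apply (ex_series_pos_le _ (fun n => 4 * oddt n)).
  - intros n. pose proof (zt_pos 2 n). split; [lra|].
    unfold zt, oddt. pose proof (pos_INR n).
    rewrite S_INR.
    replace (4 * / (2 * INR n + 1) ^ 2) with (/ ((2 * INR n + 1) ^ 2 / 4)) by (field; lra).
    apply Rinv_le_contravar.
    + apply Rdiv_lt_0_compat; [apply pow_lt; lra|lra].
    + nra.
  - exists (4 * (PI ^ 2 / 8)). apply (is_series_scal 4 oddt). apply basel_odd.
Qed.

Lemma ex_zt s : (2 <= s)%nat -> ex_series (zt s).
Proof.
  intros Hs. apply (ex_series_pos_le _ (zt 2)); [|apply ex_zt2].
  intros n. pose proof (zt_pos s n). split; [lra|].
  unfold zt. apply Rinv_le_contravar; [apply pow_lt, lt_0_INR; lia|].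
  apply Rle_pow; [|exact Hs]. rewrite S_INR. pose proof (pos_INR n). lra.
Qed.

Lemma lim_fs_series (a : nat -> R) : ex_series a -> is_lim_seq (fs a) (Series a).
Proof. intros H. apply is_series_fs. apply Series_correct. exact H. Qed.

Lemma zeta2 : is_series (zt 2) (PI ^ 2 / 6).
Proof.
  assert (HZ := lim_fs_series _ ex_zt2). set (Z := Series (zt 2)) in *.
  assert (H1 := is_lim_seq_subseq _ _ _ sub2 HZ).
  assert (H2 : is_lim_seq (fun N => fs oddt N + / 4 * fs (zt 2) N) (PI ^ 2 / 8 + / 4 * Z)).
  { apply is_lim_seq_plus'. - apply is_series_fs, basel_odd.
    - apply (is_lim_seq_scal_l _ (/4) Z). exact HZ. }
  apply (is_lim_seq_ext _ (fun N => fs (zt 2) (2 * N))) in H2.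
  2:{ intros N. rewrite fs_even_odd. f_equal.
      - apply fs_ext. intros k _. symmetry. apply zt_even.
      - rewrite <- fs_scal. apply fs_ext. intros k _. rewrite zt_odd. f_equal. simpl. field. }
  apply is_lim_seq_unique in H1. apply is_lim_seq_unique in H2. rewrite H1 in H2.
  injection H2 as H2.
  replace (PI ^ 2 / 6) with Z by lra. apply Series_correct, ex_zt2.
Qed.

Lemma alt_val s : (2 <= s)%nat ->
  is_series (fun k => (-1) ^ (S k) * zt s k) (- (1 - 2 / 2 ^ s) * Series (zt s)).
Proof.
  intros Hs.
  assert (HZ := lim_fs_series _ (ex_zt s Hs)). set (Z := Series (zt s)) in *.
  set (a := fun k => (-1) ^ (S k) * zt s k).
  assert (Ha : ex_series a).
  { apply ex_series_Rabs. apply (ex_series_pos_le _ (zt s)); [|apply ex_zt; exact Hs].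
    intros n. unfold a. rewrite Rabs_mult, <- RPow_abs, Rabs_m1, pow1, Rabs_pos_eq.
    - pose proof (zt_pos s n). split; lra.
    - left; apply zt_pos. }
  assert (HA := lim_fs_series _ Ha). set (A := Series a) in *.
  assert (H1 := is_lim_seq_subseq _ _ _ sub2 HA).
  assert (H2 : is_lim_seq (fun N => - fs (zt s) (2 * N) + 2 / 2 ^ s * fs (zt s) N) (- Z + 2 / 2 ^ s * Z)).
  { apply is_lim_seq_plus'.
    - apply (is_lim_seq_ext (fun N => -1 * fs (zt s) (2 * N))). { intros; ring. }
      replace (- Z) with (-1 * Z) by ring.
      apply (is_lim_seq_scal_l _ (-1) Z). apply (is_lim_seq_subseq _ _ _ sub2 HZ).
    - apply (is_lim_seq_scal_l _ (2 / 2 ^ s) Z). exact HZ. }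
  apply (is_lim_seq_ext _ (fun N => fs a (2 * N))) in H2.
  2:{ intros N. rewrite !fs_even_odd.
      rewrite (fs_ext (fun k => a (2 * k)%nat) (fun k => -1 * zt s (2 * k)%nat)).
      2:{ intros k _. unfold a. rewrite pow_1_odd. reflexivity. }
      rewrite (fs_ext (fun k => a (2 * k + 1)%nat) (fun k => / 2 ^ s * zt s k)).
      2:{ intros k _. unfold a. rewrite zt_odd. replace (S (2 * k + 1)) with (2 * (S k))%nat by lia.
          rewrite pow_1_even. ring. }
      rewrite (fs_ext (fun k => zt s (2 * k + 1)%nat) (fun k => / 2 ^ s * zt s k)).
      2:{ intros k _. apply zt_odd. }
      rewrite !fs_scal. field. apply pow_nonzero. lra. }
  apply is_lim_seq_unique in H1. apply is_lim_seq_unique in H2. rewrite H1 in H2.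
  injection H2 as H2.
  replace (- (1 - 2 / 2 ^ s) * Z) with A by lra. apply Series_correct, Ha.
Qed.

Definition lc (s : nat) (n : nat) : R := match n with O => 0 | S m => zt s m end.
Definition Li (s : nat) (x : R) : R := PSeries (lc s) x.

Lemma lc_bound s n : 0 <= lc s n <= 1.
Proof.
  destruct n as [|m]; simpl; [lra|]. pose proof (zt_pos s m). split; [lra|].
  unfold zt. rewrite <- Rinv_1. apply Rinv_le_contravar; [lra|].
  apply pow_R1_Rle. rewrite S_INR. pose proof (pos_INR m). lra.
Qed.

Lemma rad1 s : Rbar_le 1 (CV_radius (lc s)).
Proof.
  destruct (CV_radius_bounded (lc s)) as [Hub _]. apply Hub.
  exists 1. intros n. rewrite pow1, Rmult_1_r. pose proof (lc_bound s n).
  rewrite Rabs_pos_eq; lra.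
Qed.

Lemma in_rad s x : Rabs x < 1 -> Rbar_lt (Rabs x) (CV_radius (lc s)).
Proof.
  intros H. eapply Rbar_lt_le_trans; [|apply rad1]. simpl. exact H.
Qed.

Lemma Li_deriv s x : Rabs x < 1 -> exists D : R, is_derive (Li (S s)) x D /\ x * D = Li s x.
Proof.
  intros Hx. exists (PSeries (PS_derive (lc (S s))) x). split.
  - apply is_derive_PSeries. apply in_rad. exact Hx.
  - rewrite <- PSeries_incr_1. unfold Li. apply PSeries_ext. intros [|m].
    + reflexivity.
    + unfold PS_incr_1, PS_derive. unfold lc, zt.
      assert (0 < INR (S m)) by (apply lt_0_INR; lia).
      rewrite <- tech_pow_Rmult. field. split; [apply pow_nonzero|]; lra.
Qed.

Lemma Li1_deriv x : Rabs x < 1 -> is_derive (Li 1) x (/ (1 - x)).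
Proof.
  intros Hx. replace (/ (1 - x)) with (PSeries (PS_derive (lc 1)) x).
  - apply is_derive_PSeries. apply in_rad. exact Hx.
  - rewrite (PSeries_ext _ (fun _ => 1)).
    + unfold PSeries. apply is_series_unique.
      eapply is_series_ext; [|apply (is_series_geom x Hx)].
      intros n. simpl. ring.
    + intros n. unfold PS_derive. unfold lc, zt.
      assert (0 < INR (S n)) by (apply lt_0_INR; lia). field. lra.
Qed.

Lemma Derive_eq (f : R -> R) x l : is_derive f x l -> Derive (fun t : R => f t) x = l.
Proof. intros H. apply is_derive_unique. exact H. Qed.

Lemma Li_0 s : Li s 0 = 0.
Proof. unfold Li. rewrite PSeries_0. reflexivity. Qed.

Lemma const_open (F : R -> R) a b :
  (forall x, a < x < b -> is_derive F x 0) ->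
  forall x y, a < x < b -> a < y < b -> F x = F y.
Proof.
  intros HF x y Hx Hy.
  destruct (MVT_gen F x y (fun _ => 0)) as [c [_ Hc]].
  - intros z Hz. apply HF.
    split; [apply Rle_lt_trans with (Rmin x y); [apply Rmin_glb; lra|lra]
           |apply Rlt_le_trans with (Rmax x y); [lra|apply Rmax_lub; lra]].
  - intros z Hz. apply continuity_pt_filterlim. apply (@ex_derive_continuous R_AbsRing R_NormedModule F z).
    exists 0. apply HF.
    split; [apply Rlt_le_trans with (Rmin x y); [apply Rmin_glb_lt; lra|lra]
           |apply Rle_lt_trans with (Rmax x y); [lra|apply Rmax_lub_lt; lra]].
  - lra.
Qed.

Lemma Li1_ln x : Rabs x < 1 -> Li 1 x = - ln (1 - x).
Proof.
  intros Hx.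
  assert (H := const_open (fun y => Li 1 y + ln (1 - y)) (-1) 1).
  assert (H0 : Li 1 x + ln (1 - x) = Li 1 0 + ln (1 - 0)).
  { apply H; [|apply Rabs_def2 in Hx; lra|lra].
    intros y Hy. assert (Hy' : Rabs y < 1) by (apply Rabs_def1; lra).
    auto_derive.
    - split; [exists (/ (1 - y)); apply Li1_deriv; exact Hy'|]. split; [lra|auto].
    - rewrite (Derive_eq (Li 1) _ _ (Li1_deriv y Hy')). field. lra. }
  rewrite Li_0, Rminus_0_r, ln_1 in H0. lra.
Qed.

Definition cw (F : R -> R) (P : R -> Prop) (x0 : R) :=
  forall eps, 0 < eps -> exists d, 0 < d /\
    forall x, P x -> Rabs (x - x0) < d -> Rabs (F x - F x0) < eps.

Lemma cw_cont F P x0 : continuity_pt F x0 -> cw F P x0.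
Proof.
  intros H eps He. destruct (H eps He) as [d [Hd Hx]]. exists d. split; [exact Hd|].
  intros x _ Hxd. destruct (Req_dec x x0) as [->|Hne].
  - rewrite Rminus_eq_0, Rabs_R0. exact He.
  - apply (Hx x). split; [split; [exact I|auto]|exact Hxd].
Qed.

Lemma cw_ex_derive F P x0 : ex_derive F x0 -> cw F P x0.
Proof.
  intros H. apply cw_cont. apply continuity_pt_filterlim.
  apply (@ex_derive_continuous R_AbsRing R_NormedModule F x0). exact H.
Qed.

Lemma cw_plus F G P x0 : cw F P x0 -> cw G P x0 -> cw (fun x => F x + G x) P x0.
Proof.
  intros HF HG eps He.
  destruct (HF (eps/2) ltac:(lra)) as [d1 [Hd1 H1]].
  destruct (HG (eps/2) ltac:(lra)) as [d2 [Hd2 H2]].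
  exists (Rmin d1 d2). split; [apply Rmin_pos; lra|].
  intros x Px Hx. specialize (H1 x Px ltac:(pose proof (Rmin_l d1 d2); lra)).
  specialize (H2 x Px ltac:(pose proof (Rmin_r d1 d2); lra)).
  replace (F x + G x - (F x0 + G x0)) with ((F x - F x0) + (G x - G x0)) by ring.
  eapply Rle_lt_trans; [apply Rabs_triang|]. lra.
Qed.

Lemma cw_comp f g P Q x0 : cw f Q (g x0) -> cw g P x0 -> (forall x, P x -> Q (g x)) ->
  cw (fun x => f (g x)) P x0.
Proof.
  intros Hf Hg HPQ eps He.
  destruct (Hf eps He) as [d1 [Hd1 H1]].
  destruct (Hg d1 Hd1) as [d2 [Hd2 H2]].
  exists d2. split; [exact Hd2|]. intros x Px Hx. apply H1; [apply HPQ; exact Px|].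
  apply H2; assumption.
Qed.

Lemma cw_unif F (Pn : nat -> R -> R) P x0 : P x0 -> (forall N, cw (Pn N) P x0) ->
  (forall eps, 0 < eps -> exists N, forall y, P y -> Rabs (F y - Pn N y) < eps) ->
  cw F P x0.
Proof.
  intros Px0 HP HU eps He.
  destruct (HU (eps/3) ltac:(lra)) as [N HN].
  destruct (HP N (eps/3) ltac:(lra)) as [d [Hd H]].
  exists d. split; [exact Hd|]. intros x Px Hx.
  specialize (H x Px Hx). pose proof (HN x Px). pose proof (HN x0 Px0).
  replace (F x - F x0) with ((F x - Pn N x) + (Pn N x - Pn N x0) - (F x0 - Pn N x0)) by ring.
  revert H H0 H1. generalize (F x - Pn N x) (Pn N x - Pn N x0) (F x0 - Pn N x0).
  intros a b c. unfold Rabs. repeat destruct Rcase_abs; lra.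
Qed.

Lemma cw_lim_const F P x0 K : (forall x, P x -> F x = K) -> cw F P x0 ->
  (forall d, 0 < d -> exists x, P x /\ Rabs (x - x0) < d) -> F x0 = K.
Proof.
  intros HK Hc Hd. destruct (Req_dec (F x0) K) as [E|Hne]; [exact E|].
  assert (He : 0 < Rabs (F x0 - K)) by (apply Rabs_pos_lt; lra).
  destruct (Hc _ He) as [d [Hd0 Hx]]. destruct (Hd d Hd0) as [x [Px Hxd]].
  specialize (Hx x Px Hxd). rewrite (HK x Px) in Hx.
  rewrite <- Rabs_Ropp in Hx. replace (- (K - F x0)) with (F x0 - K) in Hx by ring. lra.
Qed.

Lemma const_closed F a b : a < b -> (forall x, a < x < b -> is_derive F x 0) ->
  cw F (fun x => a < x < b) a -> cw F (fun x => a < x < b) b ->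
  forall x, a <= x <= b -> F x = F ((a + b) / 2).
Proof.
  intros Hab HF Ha Hb.
  assert (Hint : forall x, a < x < b -> F x = F ((a + b) / 2)).
  { intros x Hx. apply (const_open F a b HF); [exact Hx|lra]. }
  intros x [[Hxa|Hxa] [Hxb|Hxb]].
  - apply Hint; lra.
  - subst x. apply (cw_lim_const F (fun x => a < x < b)); [exact Hint|exact Hb|].
    intros d Hd. exists (b - Rmin d (b - a) / 2).
    pose proof (Rmin_l d (b - a)). pose proof (Rmin_r d (b - a)).
    assert (0 < Rmin d (b - a)) by (apply Rmin_pos; lra).
    split; [lra|]. rewrite Rabs_left; lra.
  - subst x. apply (cw_lim_const F (fun x => a < x < b)); [exact Hint|exact Ha|].
    intros d Hd. exists (a + Rmin d (b - a) / 2).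
    pose proof (Rmin_l d (b - a)). pose proof (Rmin_r d (b - a)).
    assert (0 < Rmin d (b - a)) by (apply Rmin_pos; lra).
    split; [lra|]. rewrite Rabs_pos_eq; lra.
  - lra.
Qed.

Lemma poly_cw (c : nat -> R) P x0 N : cw (fun y => sum_f_R0 (fun n => c n * y ^ n) N) P x0.
Proof.
  induction N.
  - apply cw_ex_derive. simpl. auto_derive. auto.
  - apply (cw_plus (fun y => sum_f_R0 (fun n => c n * y ^ n) N) (fun y => c (S N) * y ^ (S N))).
    + exact IHN.
    + apply cw_ex_derive. auto_derive. auto.
Qed.

Lemma ex_lc s : (2 <= s)%nat -> ex_series (lc s).
Proof.
  intros Hs. apply ex_series_incr_1. apply (ex_series_ext (zt s)); [reflexivity|].
  apply ex_zt; exact Hs.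
Qed.

Lemma pow_abs_le1 y n : Rabs y <= 1 -> Rabs y ^ n <= 1.
Proof.
  intros H. induction n; simpl; [lra|].
  pose proof (Rabs_pos y). pose proof (pow_le (Rabs y) n (Rabs_pos y)). nra.
Qed.

Lemma Li_cw s y0 : (2 <= s)%nat -> -1 <= y0 <= 1 -> cw (Li s) (fun y => -1 <= y <= 1) y0.
Proof.
  intros Hs Hy0.
  apply (cw_unif _ (fun N y => sum_f_R0 (fun n => lc s n * y ^ n) N)); [exact Hy0|intros; apply poly_cw|].
  intros eps He.
  assert (Hl := ex_lc s Hs).
  assert (HL : is_lim_seq (sum_n (lc s)) (Series (lc s))) by exact (Series_correct _ Hl).
  apply is_lim_seq_spec in HL. destruct (HL (mkposreal eps He)) as [N HN]. simpl in HN.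
  specialize (HN N (le_n N)). rewrite sum_n_Reals in HN.
  exists N. intros y Hy.
  assert (Hy1 : Rabs y <= 1) by (apply Rabs_le; lra).
  assert (Hbd : forall n, 0 <= Rabs (lc s n * y ^ n) <= lc s n).
  { intros n. split; [apply Rabs_pos|]. rewrite Rabs_mult, <- RPow_abs. pose proof (lc_bound s n).
    rewrite (Rabs_pos_eq (lc s n)) by lra.
    rewrite <- (Rmult_1_r (lc s n)) at 2. apply Rmult_le_compat_l; [lra|].
    apply pow_abs_le1; exact Hy1. }
  set (a := fun n => lc s n * y ^ n).
  assert (Ha : ex_series (fun n => Rabs (a n))).
  { apply (ex_series_pos_le _ (lc s)); [exact Hbd|exact Hl]. }
  assert (Ea := Series_incr_n a (S N) ltac:(lia) (ex_series_Rabs _ Ha)).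
  assert (El := Series_incr_n (lc s) (S N) ltac:(lia) Hl).
  simpl pred in Ea, El.
  unfold Li, PSeries. fold a. rewrite Ea.
  replace (sum_f_R0 a N + Series (fun k => a (S N + k)%nat) - sum_f_R0 a N)
    with (Series (fun k => a (S N + k)%nat)) by ring.
  assert (Ht : ex_series (fun k => Rabs (a (S N + k)%nat))).
  { apply (ex_series_incr_n (fun k => Rabs (a k))). exact Ha. }
  eapply Rle_lt_trans; [apply Series_Rabs; exact Ht|].
  eapply Rle_lt_trans; [apply (Series_le _ (fun k => lc s (S N + k)%nat))|].
  - intros k. apply Hbd.
  - apply (ex_series_incr_n (lc s)). exact Hl.
  - rewrite El in HN. 
    replace (sum_f_R0 (lc s) N - (sum_f_R0 (lc s) N + Series (fun k => lc s (S N + k)%nat)))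
      with (- Series (fun k => lc s (S N + k)%nat)) in HN by ring.
    rewrite Rabs_Ropp in HN. eapply Rle_lt_trans; [apply Rle_abs|exact HN].
Qed.

Lemma Li_der s x : Rabs x < 1 -> x <> 0 -> is_derive (Li (S s)) x (Li s x / x).
Proof.
  intros H1 H2. destruct (Li_deriv s x H1) as [D [HD ED]].
  replace (Li s x / x) with D; [exact HD|]. rewrite <- ED. field. exact H2.
Qed.

Lemma abs_lt1 y : -1 < y < 1 -> Rabs y < 1.
Proof. intros H. apply Rabs_def1; lra. Qed.

Lemma landen2_der x : 1/2 < x < 1 ->
  is_derive (fun x => Li 2 (1 - x) + Li 2 (1 - / x) + / 2 * ln x ^ 2) x 0.
Proof.
  intros Hx.
  assert (Hi : 1 < / x < 2).
  { assert (/ x * x = 1) by (field; lra). assert (0 < / x) by (apply Rinv_0_lt_compat; lra). nra. }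
  assert (A1 : Rabs (1 + - x) < 1) by (apply abs_lt1; lra).
  assert (A2 : Rabs (1 + - / x) < 1) by (apply abs_lt1; lra).
  assert (N1 : 1 + - x <> 0) by lra.
  assert (N2 : 1 + - / x <> 0) by lra.
  auto_derive.
  - repeat split; try lra; eexists; apply Li_der; assumption.
  - rewrite (Derive_eq (Li 2) _ _ (Li_der 1 _ A1 N1)).
    rewrite (Derive_eq (Li 2) _ _ (Li_der 1 _ A2 N2)).
    rewrite (Li1_ln _ A1), (Li1_ln _ A2).
    replace (1 - (1 + - x)) with x by ring.
    replace (1 - (1 + - / x)) with (/ x) by ring.
    rewrite ln_Rinv by lra.
    field. lra.
Qed.

Lemma cw_Li_comp s g x0 (P : R -> Prop) : (2 <= s)%nat -> ex_derive g x0 -> -1 <= g x0 <= 1 ->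
  (forall x, P x -> -1 <= g x <= 1) -> cw (fun x => Li s (g x)) P x0.
Proof.
  intros Hs Hg Hg0 HP. apply (cw_comp (Li s) g P (fun y => -1 <= y <= 1)).
  - apply Li_cw; assumption.
  - apply cw_ex_derive; exact Hg.
  - exact HP.
Qed.

Lemma Rinv_bounds x : 1/2 < x < 1 -> 1 < / x < 2.
Proof. intros Hx. assert (/ x * x = 1) by (field; lra). assert (0 < / x) by (apply Rinv_0_lt_compat; lra). nra. Qed.

Lemma landen2 x : 1/2 <= x <= 1 -> Li 2 (1 - x) + Li 2 (1 - / x) + / 2 * ln x ^ 2 = 0.
Proof.
  intros Hx.
  set (F := fun x => Li 2 (1 - x) + Li 2 (1 - / x) + / 2 * ln x ^ 2).
  assert (Hcw : forall x0, 1/2 <= x0 <= 1 -> cw F (fun x => 1/2 < x < 1) x0).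
  { intros x0 Hx0. unfold F.
    assert (Hi0 : 1 <= / x0 <= 2).
    { assert (/ x0 * x0 = 1) by (field; lra). assert (0 < / x0) by (apply Rinv_0_lt_compat; lra). nra. }
    apply cw_plus; [apply cw_plus|].
    - apply cw_Li_comp; [lia| |lra|]. { auto_derive; auto. } intros z Hz. lra.
    - apply cw_Li_comp; [lia| |lra|]. { auto_derive; lra. }
      intros z Hz. pose proof (Rinv_bounds z Hz). lra.
    - apply cw_ex_derive. auto_derive. lra. }
  assert (H := const_closed F (1/2) 1 ltac:(lra) landen2_der (Hcw (1/2) ltac:(lra)) (Hcw 1 ltac:(lra))).
  assert (F1 : F 1 = 0).
  { unfold F. rewrite Rinv_1, Rminus_eq_0, Li_0, ln_1. ring. }
  change (F x = 0). rewrite (H x Hx), <- (H 1 ltac:(lra)). exact F1.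
Qed.

Lemma Li_ser s x : ex_series (fun n => lc s n * x ^ n) ->
  Li s x = Series (fun k => zt s k * x ^ (S k)).
Proof.
  intros H. unfold Li, PSeries. rewrite Series_incr_1 by exact H.
  simpl lc. rewrite Rmult_0_l, Rplus_0_l. reflexivity.
Qed.

Lemma ex_Li_closed s x : (2 <= s)%nat -> Rabs x <= 1 -> ex_series (fun n => lc s n * x ^ n).
Proof.
  intros Hs Hx. apply ex_series_Rabs. apply (ex_series_pos_le _ (lc s)); [|apply ex_lc; exact Hs].
  intros n. split; [apply Rabs_pos|]. rewrite Rabs_mult, <- RPow_abs. pose proof (lc_bound s n).
  rewrite (Rabs_pos_eq (lc s n)) by lra.
  rewrite <- (Rmult_1_r (lc s n)) at 2. apply Rmult_le_compat_l; [lra|].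
  apply pow_abs_le1; exact Hx.
Qed.

Lemma Li_1 s : (2 <= s)%nat -> Li s 1 = Series (zt s).
Proof.
  intros Hs. rewrite Li_ser. - apply Series_ext. intros k. rewrite pow1. ring.
  - apply ex_Li_closed; [exact Hs|rewrite Rabs_R1; lra].
Qed.

Lemma Li_m1 s : (2 <= s)%nat -> Li s (-1) = - (1 - 2 / 2 ^ s) * Series (zt s).
Proof.
  intros Hs. rewrite Li_ser.
  - apply is_series_unique. eapply is_series_ext; [|apply (alt_val s Hs)].
    intros n. simpl. ring.
  - apply ex_Li_closed; [exact Hs|rewrite Rabs_left; lra].
Qed.

Lemma Z2 : Series (zt 2) = PI ^ 2 / 6.
Proof. apply is_series_unique, zeta2. Qed.

Lemma ln_half : ln (1/2) = - ln 2.
Proof. unfold Rdiv. rewrite Rmult_1_l, ln_Rinv by lra. reflexivity. Qed.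

Lemma Li2_half : Li 2 (1/2) = PI ^ 2 / 12 - ln 2 ^ 2 / 2.
Proof.
  assert (H := landen2 (1/2) ltac:(lra)).
  replace (1 - 1/2) with (1/2) in H by field.
  replace (1 - / (1/2)) with (-1) in H by field.
  rewrite Li_m1, Z2, ln_half in H by lia. simpl in H. lra.
Qed.

Lemma refl2 x : 0 < x < 1 -> Li 2 x + Li 2 (1 - x) + ln x * ln (1 - x) = PI ^ 2 / 6.
Proof.
  intros Hx.
  assert (Hd : forall y, 0 < y < 1 -> is_derive (fun y => Li 2 y + Li 2 (1 - y) + ln y * ln (1 - y)) y 0).
  { intros y Hy.
    assert (A0 : Rabs y < 1) by (apply abs_lt1; lra).
    assert (A1 : Rabs (1 + - y) < 1) by (apply abs_lt1; lra).
    assert (N0 : y <> 0) by lra.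
    assert (N1 : 1 + - y <> 0) by lra.
    auto_derive.
    - repeat split; try lra; eexists; apply Li_der; assumption.
    - rewrite (Derive_eq (Li 2) _ _ (Li_der 1 _ A0 N0)).
      rewrite (Derive_eq (Li 2) _ _ (Li_der 1 _ A1 N1)).
      rewrite (Li1_ln _ A1), (Li1_ln _ A0).
      replace (1 - (1 + - y)) with y by ring.
      change (1 - y) with (1 + - y).
      field. lra. }
  rewrite (const_open _ 0 1 Hd x (1/2) Hx ltac:(lra)).
  change (Li 2 (1/2) + Li 2 (1 - 1/2) + ln (1/2) * ln (1 - 1/2) = PI ^ 2 / 6).
  replace (1 - 1/2) with (1/2) by field. rewrite Li2_half, ln_half. field.
Qed.

Definition H3 (x : R) := Li 3 x + Li 3 (1 - x) + Li 3 (1 - / x) +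
  (- ln x ^ 3 / 6 - PI ^ 2 / 6 * ln x) + / 2 * ln x ^ 2 * ln (1 - x).

Lemma H3_der x : 1/2 < x < 1 -> is_derive H3 x 0.
Proof.
  intros Hx. unfold H3.
  pose proof (Rinv_bounds x Hx) as Hi.
  assert (A0 : Rabs x < 1) by (apply abs_lt1; lra).
  assert (A1 : Rabs (1 + - x) < 1) by (apply abs_lt1; lra).
  assert (A2 : Rabs (1 + - / x) < 1) by (apply abs_lt1; lra).
  assert (N0 : x <> 0) by lra.
  assert (N1 : 1 + - x <> 0) by lra.
  assert (N2 : 1 + - / x <> 0) by lra.
  auto_derive.
  - repeat split; try lra; eexists; apply Li_der; assumption.
  - rewrite (Derive_eq (Li 3) _ _ (Li_der 2 _ A0 N0)).
    rewrite (Derive_eq (Li 3) _ _ (Li_der 2 _ A1 N1)).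
    rewrite (Derive_eq (Li 3) _ _ (Li_der 2 _ A2 N2)).
    assert (L2 := landen2 x ltac:(lra)). change (1 - x) with (1 + - x) in L2.
    change (1 - / x) with (1 + - / x) in L2.
    assert (R2 := refl2 x ltac:(lra)). change (1 - x) with (1 + - x) in R2.
    replace (Li 2 (1 + - / x)) with (- Li 2 (1 + - x) - / 2 * ln x ^ 2) by lra.
    replace (Li 2 x) with (PI ^ 2 / 6 - Li 2 (1 + - x) - ln x * ln (1 + - x)) by lra.
    field. lra.
Qed.

Lemma ln_le_m1 y : 0 < y -> ln y <= y - 1.
Proof. intros Hy. pose proof (exp_ineq1_le (ln y)). rewrite exp_ln in H by exact Hy. lra. Qed.

Lemma E2_bound x : 1/2 < x < 1 -> Rabs (/ 2 * ln x ^ 2 * ln (1 - x)) <= 2 * (1 - x).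
Proof.
  intros Hx.
  assert (Hl1 : - ln x <= 2 * (1 - x)).
  { pose proof (ln_le_m1 (/ x) ltac:(apply Rinv_0_lt_compat; lra)) as H.
    rewrite ln_Rinv in H by lra. pose proof (Rinv_bounds x Hx).
    assert (/ x - 1 <= 2 * (1 - x)).
    { assert (/ x * x = 1) by (field; lra). nra. }
    lra. }
  assert (Hl0 : ln x < 0) by (rewrite <- ln_1; apply ln_increasing; lra).
  assert (Hm : - ln (1 - x) <= / (1 - x)).
  { pose proof (ln_le_m1 (/ (1 - x)) ltac:(apply Rinv_0_lt_compat; lra)) as H.
    rewrite ln_Rinv in H by lra. lra. }
  assert (Hm0 : ln (1 - x) < 0) by (rewrite <- ln_1; apply ln_increasing; lra).
  assert (Hm1 : - ln (1 - x) * (1 - x) <= 1).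
  { assert (/ (1 - x) * (1 - x) = 1) by (field; lra). nra. }
  replace (/ 2 * ln x ^ 2 * ln (1 - x)) with (- (/ 2 * (- ln x) ^ 2 * (- ln (1 - x)))) by ring.
  rewrite Rabs_Ropp. rewrite Rabs_pos_eq.
  2:{ assert (0 <= (- ln x) ^ 2) by (apply pow_le; lra). apply Rmult_le_pos; [lra|]. lra. }
  assert (P1 : (- ln x) ^ 2 <= 4 * (1 - x) ^ 2) by nra.
  assert (P2 : / 2 * (- ln x) ^ 2 * (- ln (1 - x)) <= 2 * (1 - x) ^ 2 * (- ln (1 - x))).
  { apply Rmult_le_compat_r; lra. }
  assert (P3 : 2 * (1 - x) ^ 2 * (- ln (1 - x)) = 2 * (1 - x) * (- ln (1 - x) * (1 - x))) by ring.
  assert (P4 : 2 * (1 - x) * (- ln (1 - x) * (1 - x)) <= 2 * (1 - x) * 1).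
  { apply Rmult_le_compat_l; lra. }
  lra.
Qed.

Lemma cw_E2_1 : cw (fun x => / 2 * ln x ^ 2 * ln (1 - x)) (fun x => 1/2 < x < 1) 1.
Proof.
  intros eps He. exists (eps / 2). split; [lra|].
  intros x Hx Hd. rewrite ln_1. replace (/ 2 * 0 ^ 2 * ln (1 - 1)) with 0 by ring.
  rewrite Rminus_0_r. eapply Rle_lt_trans; [apply E2_bound; exact Hx|].
  rewrite Rabs_left in Hd by lra. lra.
Qed.

Lemma H3_cw x0 : 1/2 <= x0 <= 1 -> (x0 = 1/2 \/ x0 = 1) -> cw H3 (fun x => 1/2 < x < 1) x0.
Proof.
  intros Hx0 Hc. unfold H3.
  assert (Hi0 : 1 <= / x0 <= 2).
  { assert (/ x0 * x0 = 1) by (field; lra). assert (0 < / x0) by (apply Rinv_0_lt_compat; lra). nra. }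
  apply cw_plus; [apply cw_plus; [apply cw_plus; [apply cw_plus|]|]|].
  - apply (cw_Li_comp 3 (fun x => x)); [lia| |lra|]. { auto_derive; auto. } intros z Hz. lra.
  - apply cw_Li_comp; [lia| |lra|]. { auto_derive; auto. } intros z Hz. lra.
  - apply cw_Li_comp; [lia| |lra|]. { auto_derive; lra. }
    intros z Hz. pose proof (Rinv_bounds z Hz). lra.
  - apply cw_ex_derive. auto_derive. lra.
  - destruct Hc as [->| ->].
    + apply cw_ex_derive. auto_derive. lra.
    + exact cw_E2_1.
Qed.

Lemma Li3_half : Li 3 (1/2) = 7 / 8 * Series (zt 3) + ln 2 ^ 3 / 6 - PI ^ 2 / 12 * ln 2.
Proof.
  assert (H := const_closed H3 (1/2) 1 ltac:(lra) H3_der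
                 (H3_cw (1/2) ltac:(lra) ltac:(auto)) (H3_cw 1 ltac:(lra) ltac:(auto))).
  assert (E : H3 (1/2) = H3 1) by (rewrite (H (1/2) ltac:(lra)), (H 1 ltac:(lra)); reflexivity).
  unfold H3 in E.
  rewrite Rinv_1, Rminus_eq_0, Li_0, ln_1, Li_1 in E by lia.
  replace (1 - 1/2) with (1/2) in E by field.
  replace (1 - / (1/2)) with (-1) in E by field.
  rewrite Li_m1, ln_half in E by lia.
  simpl in E. lra.
Qed.

Lemma Li_is_series s x : Rabs x < 1 -> is_series (fun n => lc s n * x ^ n) (Li s x).
Proof.
  intros Hx. assert (H := PSeries_correct _ _ (CV_radius_inside _ _ (in_rad s x Hx))).
  unfold is_pseries in H. eapply is_series_ext; [|exact H].
  intros n. unfold scal; simpl. unfold mult; simpl. rewrite <- (pow_n_pow x n). apply Rmult_comm.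
Qed.

Lemma Li_is_series_S s x : Rabs x < 1 -> is_series (fun k => x ^ (S k) * zt s k) (Li s x).
Proof.
  intros Hx. apply (is_series_ext (fun k => lc s (S k) * x ^ (S k))).
  { intros k. apply Rmult_comm. }
  apply (@is_series_incr_1 R_AbsRing R_NormedModule (fun n => lc s n * x ^ n)).
  change (plus (Li s x) (lc s 0 * x ^ 0)) with (Li s x + 0 * 1).
  rewrite Rmult_0_l, Rplus_0_r. apply Li_is_series; exact Hx.
Qed.

Definition qt (n : nat) := (1/2) ^ n / (2 * INR n + 1).

Lemma sqrt2_facts : sqrt 2 * sqrt 2 = 2 /\ 1 < sqrt 2.
Proof.
  split; [apply sqrt_sqrt; lra|].
  rewrite <- sqrt_1. apply sqrt_lt_1; lra.
Qed.

Lemma odd_sum : is_series qt (sqrt 2 * ln (1 + sqrt 2)).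
Proof.
  destruct sqrt2_facts as [Hs2 Hs1]. set (s := sqrt 2) in *.
  set (y := / s).
  assert (Hy : y = s / 2) by (unfold y; field_simplify_eq; [nra|lra]).
  assert (Hs3 : s < 2) by nra.
  assert (Hy1 : Rabs y < 1) by (apply abs_lt1; lra).
  assert (Hy2 : Rabs (- y) < 1) by (apply abs_lt1; lra).
  assert (HM := is_series_minus _ _ _ _ (Li_is_series 1 y Hy1) (Li_is_series 1 (-y) Hy2)).
  set (c := fun n => plus (lc 1 n * y ^ n) (opp (lc 1 n * (- y) ^ n))) in HM.
  set (l := plus (Li 1 y) (opp (Li 1 (- y)))) in HM.
  apply is_series_fs in HM.
  assert (H1 := is_lim_seq_subseq _ _ _ sub2 HM).
  apply (is_lim_seq_ext _ (fs (fun k => (2 * y) * qt k))) in H1.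
  2:{ intros N. rewrite fs_even_odd.
      rewrite (fs_ext (fun k => c (2 * k)%nat) (fun _ => 0)).
      2:{ intros k _. unfold c, plus, opp; simpl.
          replace (k + (k + 0))%nat with (2 * k)%nat by lia.
          replace (- y) with (-1 * y) by ring. rewrite Rpow_mult_distr, pow_1_even. ring. }
      rewrite fs_const, Rmult_0_r, Rplus_0_l. apply fs_ext. intros k _. unfold c, plus, opp; simpl.
      replace (k + (k + 0) + 1)%nat with (2 * k + 1)%nat by lia.
      replace (- y) with (-1 * y) by ring. rewrite Rpow_mult_distr.
      replace (2 * k + 1)%nat with (S (2 * k)) by lia. rewrite pow_1_odd.
      unfold lc, zt, qt. rewrite <- (tech_pow_Rmult y (2 * k)), pow_mult.
      replace (y ^ 2) with (1/2) by (rewrite Hy; replace ((s/2)^2) with (s*s/4) by field; rewrite Hs2; field).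
      rewrite S_INR, mult_INR. replace (INR 2) with 2 by (simpl; lra).
      field. pose proof (pos_INR k). lra. }
  apply is_series_fs in H1.
  apply (is_series_scal (/ (2 * y))) in H1.
  eapply is_series_ext in H1.
  2:{ intros n. unfold scal; simpl; unfold mult; simpl. rewrite <- Rmult_assoc, Rinv_l; [|lra].
      rewrite Rmult_1_l. reflexivity. }
  enough (E : scal (/ (2 * y)) (plus (Li 1 y) (opp (Li 1 (- y)))) = s * ln (1 + s))
    by (rewrite <- E; exact H1).
  unfold scal, plus, opp; simpl; unfold mult; simpl.
  rewrite !Li1_ln by assumption.
  assert (Hln : ln (1 - - y) = ln (1 - y) + 2 * ln (1 + s)).
  { replace (1 - - y) with ((1 - y) * ((1 + s) * (1 + s))).
    - rewrite ln_mult, ln_mult by nra. ring.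
    - rewrite Hy.
      replace ((1 - s / 2) * ((1 + s) * (1 + s))) with (1 + s / 2 + (- (s / 2)) * (s * s - 2)) by field.
      rewrite Hs2. field. }
  rewrite Hln. replace (/ (2 * y)) with (s / 2) by (unfold y; field; lra). field.
Qed.

Lemma lin4 a b c d la lb lc ld x1 x2 x3 x4 :
  is_series a la -> is_series b lb -> is_series c lc -> is_series d ld ->
  is_series (fun n => x1 * a n + x2 * b n + x3 * c n + x4 * d n) (x1 * la + x2 * lb + x3 * lc + x4 * ld).
Proof.
  intros Ha Hb Hc Hd.
  exact (is_series_plus _ _ _ _ (is_series_plus _ _ _ _ (is_series_plus _ _ _ _
    (is_series_scal x1 _ _ Ha) (is_series_scal x2 _ _ Hb)) (is_series_scal x3 _ _ Hc))
    (is_series_scal x4 _ _ Hd)).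
Qed.

Definition pt (s : nat) (n : nat) := (1/2) ^ (S n) * zt s n.

Lemma half_abs : Rabs (1/2) < 1.
Proof. rewrite Rabs_pos_eq; lra. Qed.

Lemma P1 : is_series (pt 1) (ln 2).
Proof.
  assert (H := Li_is_series_S 1 (1/2) half_abs).
  rewrite Li1_ln in H by exact half_abs.
  replace (1 - 1/2) with (1/2) in H by field. rewrite ln_half, Ropp_involutive in H. exact H.
Qed.

Lemma P2 : is_series (pt 2) (PI ^ 2 / 12 - ln 2 ^ 2 / 2).
Proof. rewrite <- Li2_half. exact (Li_is_series_S 2 (1/2) half_abs). Qed.

Lemma P3 : is_series (pt 3) (7 / 8 * Series (zt 3) + ln 2 ^ 3 / 6 - PI ^ 2 / 12 * ln 2).
Proof. rewrite <- Li3_half. exact (Li_is_series_S 3 (1/2) half_abs). Qed.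

Lemma Qs : is_series (fun n => qt (S n)) (sqrt 2 * ln (1 + sqrt 2) - 1).
Proof.
  apply (@is_series_incr_1 R_AbsRing R_NormedModule qt).
  change (plus (sqrt 2 * ln (1 + sqrt 2) - 1) (qt 0)) with (sqrt 2 * ln (1 + sqrt 2) - 1 + qt 0).
  replace (sqrt 2 * ln (1 + sqrt 2) - 1 + qt 0) with (sqrt 2 * ln (1 + sqrt 2))
    by (unfold qt; simpl; field).
  exact odd_sum.
Qed.

Lemma Z3 : Series (zt 3) = zeta3.
Proof.
  unfold zeta3. apply Series_ext. intros n. unfold zt. rewrite Nat.add_1_r.
  assert (INR (S n) <> 0) by (apply not_0_INR; lia). field. auto.
Qed.

Lemma term1_eq n : term 1 (n + 1) = - / 2 * pt 1 n + / 4 * qt n + / 2 * qt (S n) + 0 * pt 1 n.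
Proof.
  unfold term, pt, qt, zt.
  rewrite !Nat.add_1_r. rewrite !S_INR.
  replace (1/2) with (/2) by field. rewrite !pow_inv.
  simpl pow. pose proof (pos_INR n). assert (0 < 2 ^ n) by (apply pow_lt; lra).
  field. repeat split; lra.
Qed.

Lemma term2_eq n : term 2 (n + 1) = - / 4 * pt 2 n + / 4 * qt n + - / 2 * qt (S n) + 0 * pt 1 n.
Proof.
  unfold term, pt, qt, zt.
  replace (n + 1 + 2)%nat with (S (S (S n))) by lia.
  rewrite !Nat.add_1_r. rewrite !S_INR.
  replace (1/2) with (/2) by field. rewrite !pow_inv.
  simpl pow. pose proof (pos_INR n). assert (0 < 2 ^ n) by (apply pow_lt; lra).
  field. repeat split; lra.
Qed.

Lemma term3_eq n : term 3 (n + 1) = - / 8 * pt 3 n + - / 2 * pt 1 n + / 4 * qt n + / 2 * qt (S n).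
Proof.
  unfold term, pt, qt, zt.
  replace (n + 1 + 3)%nat with (S (S (S (S n)))) by lia.
  rewrite !Nat.add_1_r. rewrite !S_INR.
  replace (1/2) with (/2) by field. rewrite !pow_inv.
  simpl pow. pose proof (pos_INR n). assert (0 < 2 ^ n) by (apply pow_lt; lra).
  field. repeat split; lra.
Qed.

Theorem corollary4 :
  is_series (fun n : nat => term 1 (n + 1))
    (3 / (2 * sqrt 2) * ln (1 + sqrt 2) - 1 / 2 * (ln 2 + 1))
  /\
  is_series (fun n : nat => term 2 (n + 1))
    (1 / 2 + 1 / 8 * (ln 2) ^ 2 - PI ^ 2 / 48 - 1 / (2 * sqrt 2) * ln (1 + sqrt 2))
  /\
  is_series (fun n : nat => term 3 (n + 1))
    (3 / (2 * sqrt 2) * ln (1 + sqrt 2) + PI ^ 2 * ln 2 / 96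
     - 1 / 2 * (ln 2 + 1) - (ln 2) ^ 3 / 48 - 7 / 64 * zeta3).
Proof.
  destruct sqrt2_facts as [Hs2 Hs1].
  assert (Hsi : / sqrt 2 = sqrt 2 / 2) by (field_simplify_eq; [nra|lra]).
  replace (3 / (2 * sqrt 2)) with (3 / 4 * sqrt 2) by (unfold Rdiv; rewrite Rinv_mult, Hsi; field).
  replace (1 / (2 * sqrt 2)) with (1 / 4 * sqrt 2) by (unfold Rdiv; rewrite Rinv_mult, Hsi; field).
  split; [|split].
  - eapply is_series_ext; [intros n; symmetry; apply term1_eq|].
    replace (3 / 4 * sqrt 2 * ln (1 + sqrt 2) - 1 / 2 * (ln 2 + 1))
      with (- / 2 * ln 2 + / 4 * (sqrt 2 * ln (1 + sqrt 2)) + / 2 * (sqrt 2 * ln (1 + sqrt 2) - 1) + 0 * ln 2)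
      by field.
    apply lin4; [exact P1|exact odd_sum|exact Qs|exact P1].
  - eapply is_series_ext; [intros n; symmetry; apply term2_eq|].
    replace (1 / 2 + 1 / 8 * ln 2 ^ 2 - PI ^ 2 / 48 - 1 / 4 * sqrt 2 * ln (1 + sqrt 2))
      with (- / 4 * (PI ^ 2 / 12 - ln 2 ^ 2 / 2) + / 4 * (sqrt 2 * ln (1 + sqrt 2))
            + - / 2 * (sqrt 2 * ln (1 + sqrt 2) - 1) + 0 * ln 2)
      by field.
    apply lin4; [exact P2|exact odd_sum|exact Qs|exact P1].
  - eapply is_series_ext; [intros n; symmetry; apply term3_eq|].
    rewrite <- Z3.
    replace (3 / 4 * sqrt 2 * ln (1 + sqrt 2) + PI ^ 2 * ln 2 / 96 - 1 / 2 * (ln 2 + 1)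
             - ln 2 ^ 3 / 48 - 7 / 64 * Series (zt 3))
      with (- / 8 * (7 / 8 * Series (zt 3) + ln 2 ^ 3 / 6 - PI ^ 2 / 12 * ln 2) + - / 2 * ln 2
            + / 4 * (sqrt 2 * ln (1 + sqrt 2)) + / 2 * (sqrt 2 * ln (1 + sqrt 2) - 1))
      by field.
    apply lin4; [exact P3|exact P1|exact odd_sum|exact Qs].
Qed.
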